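(* Fix integers $K,M,N\ge 1$ and constants $P_c>0$, $P_{\max}>0$. Let $(\tilde{\mathbf{H}}(n))_{n\ge1}$ be an arbitrary sequence of block-diagonal matrices $\tilde{\mathbf{H}}(n)=\operatorname{diag}(\tilde{\mathbf{H}}_1(n),\dots,\tilde{\mathbf{H}}_K(n))$ with $\tilde{\mathbf{H}}_k(n)\in\mathbb{C}^{N\times M}$, and suppose the induced gradients satisfy $\|\mathbf{V}(n)\|\le V_0$ for all $n$ and some constant $V_0>0$ (notation as in the context). Let $(\gamma_n)_{n\ge1}$ be a nonincreasing sequence of positive step-sizes with $\gamma_n\to0$ and $n\gamma_n\to\infty$, and let $\mathbf{X}(n)$ be generated by the online gradient ascent recursion $\mathbf{X}(n+1)=\boldsymbol{\Pi}(\mathbf{X}(n)+\gamma_n\mathbf{V}(n))$ from an initial point $\mathbf{X}(1)\in\mathcal{X}$, with transmit policy $\mathbf{Q}(n)=\mathbf{Q}(\mathbf{X}(n))$. Then the policy $\mathbf{Q}(n)$ leads to no regret, i.e. $\limsup_{T\to\infty}T^{-1}\mathrm{Reg}(T)\le0$; specifically, for all $T\ge1$, $$\mathrm{Reg}(T)\le \frac{1}{\gamma_T}+\frac12 V_0^2\sum_{n=1}^T\gamma_n,$$ and, for the step-size sequence $\gamma_n=\gamma n^{-1/2}$ with $\gamma>0$, $$\mathrm{Reg}(T)\le\frac{1+\gamma^2V_0^2}{\gamma}\sqrt{T}.$$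
   Context: All matrices are complex; $\mathbf{A}^\dagger$ is the conjugate transpose and $\|\mathbf{A}\|=\operatorname{tr}(\mathbf{A}^\dagger\mathbf{A})^{1/2}$ the Frobenius norm. The effective channel matrices $\tilde{\mathbf{H}}(n)$ are assumed uniformly bounded in $n$. Feasible transmit set: $\mathcal{Q}=\{\mathbf{Q}=\operatorname{diag}(\mathbf{Q}_1,\dots,\mathbf{Q}_K):\mathbf{Q}_k\in\mathbb{C}^{M\times M}\text{ Hermitian},\ \mathbf{Q}_k\succeq0,\ \sum_k\operatorname{tr}\mathbf{Q}_k\le P_{\max}\}$. Energy efficiency at stage $n$: $\mathrm{EE}(\mathbf{Q};n)=\dfrac{\log\det(\mathbf{I}+\tilde{\mathbf{H}}(n)\mathbf{Q}\tilde{\mathbf{H}}(n)^\dagger)}{P_c+\operatorname{tr}\mathbf{Q}}$, with rate $R_n(\mathbf{Q})=\log\det(\mathbf{I}+\tilde{\mathbf{H}}(n)\mathbf{Q}\tilde{\mathbf{H}}(n)^\dagger)$. Normalized set: $\mathcal{X}=\{\mathbf{X}=\operatorname{diag}(\mathbf{X}_1,\dots,\mathbf{X}_K):\mathbf{X}_k\in\mathbb{C}^{M\times M}\text{ Hermitian},\ \mathbf{X}_k\succeq0,\ \sum_k\operatorname{tr}\mathbf{X}_k\le1\}$, with the bijection $\mathbf{Q}(\mathbf{X})=\dfrac{P_cP_{\max}}{P_c+P_{\max}(1-\operatorname{tr}\mathbf{X})}\mathbf{X}$ onto $\mathcal{Q}$. Utility: $u(\mathbf{X};n)=\mathrm{EE}(\mathbf{Q}(\mathbf{X});n)=\dfrac{P_c+P_{\max}(1-\operatorname{tr}\mathbf{X})}{P_c(P_c+P_{\max})}\log\det\Big(\mathbf{I}+\dfrac{P_cP_{\max}\tilde{\mathbf{H}}(n)\mathbf{X}\tilde{\mathbf{H}}(n)^\dagger}{P_c+P_{\max}(1-\operatorname{tr}\mathbf{X})}\Big)$.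 Gradient: $\mathbf{V}(n)=\nabla_{\mathbf{X}}u(\mathbf{X}(n);n)=\dfrac{P_{\max}}{P_c+P_{\max}}\Big[\mathbf{A}_n+\dfrac{\operatorname{tr}(\mathbf{A}_n\mathbf{Q}(n))-R_n(\mathbf{Q}(n))}{P_c}\mathbf{I}\Big]$ where $\mathbf{A}_n=\tilde{\mathbf{H}}(n)^\dagger[\mathbf{I}+\tilde{\mathbf{H}}(n)\mathbf{Q}(n)\tilde{\mathbf{H}}(n)^\dagger]^{-1}\tilde{\mathbf{H}}(n)$ and $\mathbf{Q}(n)=\mathbf{Q}(\mathbf{X}(n))$. Projection: $\boldsymbol{\Pi}(\mathbf{Y})=\arg\min_{\mathbf{X}\in\mathcal{X}}\|\mathbf{X}-\mathbf{Y}\|^2$. Regret: $\mathrm{Reg}(T)=\max_{\mathbf{Q}\in\mathcal{Q}}\sum_{n=1}^T[\mathrm{EE}(\mathbf{Q};n)-\mathrm{EE}(\mathbf{Q}(n);n)]$; a policy leads to no regret if $\limsup_{T\to\infty}T^{-1}\mathrm{Reg}(T)\le0$. *)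

(* Defs.v *)
From HB Require Import structures.
From mathcomp Require Import all_boot all_order all_algebra.
From mathcomp Require Import all_classical all_reals all_analysis.
From mathcomp Require Import complex.
Set Implicit Arguments. Unset Strict Implicit. Unset Printing Implicit Defensive.
Import Order.TTheory GRing.Theory Num.Theory.
Local Open Scope ring_scope.

Section Defs.
Variable R : realType.
Local Notation C := R[i].

Definition adj {m n : nat} (A : 'M[C]_(m, n)) : 'M[C]_(n, m) :=
  (map_mx (@conjc R) A)^T.

Definition frob {m n : nat} (A : 'M[C]_(m, n)) : R :=
  Num.sqrt (complex.Re (\tr (adj A *m A))).

Definition blockdiag (K p q : nat) (A : 'M[C]_(K * p, K * q)) : Prop :=
  forall (i : 'I_(K * p)) (j : 'I_(K * q)),
    (i %/ p)%N != (j %/ q)%N -> A i j = 0.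

Definition hermitian {m : nat} (A : 'M[C]_m) : Prop := adj A = A.

(* positive semidefinite: v^dagger A v is real and >= 0 for all v *)
Definition psd {m : nat} (A : 'M[C]_m) : Prop :=
  forall v : 'cV[C]_m, 0 <= (adj v *m A *m v) ord0 ord0.

Definition Qset (K M : nat) (Pmax : R) (Q : 'M[C]_(K * M)) : Prop :=
  blockdiag Q /\ hermitian Q /\ psd Q /\ complex.Re (\tr Q) <= Pmax.

Definition Xset (K M : nat) (X : 'M[C]_(K * M)) : Prop :=
  blockdiag X /\ hermitian X /\ psd X /\ complex.Re (\tr X) <= 1.

Definition QofX (K M : nat) (Pc Pmax : R) (X : 'M[C]_(K * M)) : 'M[C]_(K * M) :=
  ((Pc * Pmax / (Pc + Pmax * (1 - complex.Re (\tr X))))%:C)%C *: X.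

Definition rate (K N M : nat) (H : 'M[C]_(K * N, K * M)) (Q : 'M[C]_(K * M)) : R :=
  ln (complex.Re (\det (1%:M + H *m Q *m adj H))).

Definition EE (K N M : nat) (Pc : R) (H : 'M[C]_(K * N, K * M)) (Q : 'M[C]_(K * M)) : R :=
  rate H Q / (Pc + complex.Re (\tr Q)).

Definition Amat (K N M : nat) (H : 'M[C]_(K * N, K * M)) (Q : 'M[C]_(K * M)) : 'M[C]_(K * M) :=
  adj H *m invmx (1%:M + H *m Q *m adj H) *m H.

(* gradient V(n) = grad_X u(X(n);n) *)
Definition Vgrad (K N M : nat) (Pc Pmax : R) (H : 'M[C]_(K * N, K * M))
    (X : 'M[C]_(K * M)) : 'M[C]_(K * M) :=
  let Q := QofX Pc Pmax X in
  let A := Amat H Q in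
  ((Pmax / (Pc + Pmax))%:C)%C *:
    (A + (((\tr (A *m Q) - ((rate H Q)%:C)%C) / (Pc%:C)%C)%:M)).

Definition is_proj (K M : nat) (Y Z : 'M[C]_(K * M)) : Prop :=
  Xset Z /\ forall W : 'M[C]_(K * M), Xset W -> frob (Z - Y) <= frob (W - Y).

(* Reg(T) = max_{Q in Qset} sum_{n=1}^T [EE(Q;n) - EE(Q(n);n)],
   written as a supremum (the max is attained, Qset being compact) *)
Definition Reg (K N M : nat) (Pc Pmax : R) (H : nat -> 'M[C]_(K * N, K * M))
    (Qpol : nat -> 'M[C]_(K * M)) (T : nat) : R :=
  sup [set r | exists Q : 'M[C]_(K * M), Qset Pmax Q /\
        r = \sum_(1 <= n < T.+1) (EE Pc (H n) Q - EE Pc (H n) (Qpol n))].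

End Defs.

(* Main.v *)
Require Import Defs.
From HB Require Import structures.
From mathcomp Require Import all_boot all_order all_algebra.
From mathcomp Require Import all_classical all_reals all_analysis.
From mathcomp Require Import complex.
From mathcomp Require Import ring lra.
Import Order.TTheory GRing.Theory Num.Theory.
Import numFieldNormedType.Exports.
Local Open Scope classical_set_scope.
Local Open Scope ring_scope.

Set Implicit Arguments. Unset Strict Implicit. Unset Printing Implicit Defensive.

Section LA.
Variable R : realType.
Local Notation C := R[i].

Lemma conjE (x : C) : Num.conj x = conjc x. Proof. by []. Qed.

Lemma adjE m n (A : 'M[C]_(m, n)) i j : adj A i j = conjc (A j i).
Proof. by rewrite /adj !mxE. Qed.

Lemma adjK m n (A : 'M[C]_(m, n)) : adj (adj A) = A.
Proof. by apply/matrixP => i j; rewrite !adjE conjcK. Qed.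

Lemma adjM m n p (A : 'M[C]_(m, n)) (B : 'M[C]_(n, p)) :
  adj (A *m B) = adj B *m adj A.
Proof.
apply/matrixP => i j; rewrite adjE !mxE rmorph_sum; apply: eq_bigr => k _.
by rewrite rmorphM !adjE mulrC.
Qed.

Lemma adjD m n (A B : 'M[C]_(m, n)) : adj (A + B) = adj A + adj B.
Proof. by apply/matrixP => i j; rewrite /adj !mxE rmorphD. Qed.

Lemma adjN m n (A : 'M[C]_(m, n)) : adj (- A) = - adj A.
Proof. by apply/matrixP => i j; rewrite /adj !mxE rmorphN. Qed.

Lemma adjB m n (A B : 'M[C]_(m, n)) : adj (A - B) = adj A - adj B.
Proof. by rewrite adjD adjN. Qed.

Lemma adjZ m n (a : C) (A : 'M[C]_(m, n)) : adj (a *: A) = conjc a *: adj A.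
Proof. by apply/matrixP => i j; rewrite /adj !mxE rmorphM. Qed.

Lemma adj_scalar n (a : C) : adj (a%:M : 'M[C]_n) = (conjc a)%:M.
Proof.
apply/matrixP => i j; rewrite /adj !mxE eq_sym.
by rewrite rmorphMn.
Qed.

Lemma adj1 n : adj (1%:M : 'M[C]_n) = 1%:M.
Proof. by rewrite adj_scalar rmorph1. Qed.

Lemma adj0 m n : adj (0 : 'M[C]_(m, n)) = 0.
Proof. by apply/matrixP => i j; rewrite /adj !mxE rmorph0. Qed.

Lemma conjc_real' (x : R) : conjc (x%:C)%C = (x%:C)%C.
Proof. exact: conjc_real. Qed.

Lemma det_adj n (A : 'M[C]_n) : \det (adj A) = conjc (\det A).
Proof. by rewrite /adj det_tr det_map_mx. Qed.

Lemma tr_adj n (A : 'M[C]_n) : \tr (adj A) = conjc (\tr A).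
Proof. by rewrite /adj mxtrace_tr /mxtrace rmorph_sum; apply: eq_bigr => i _; rewrite mxE. Qed.


Lemma adj_tC n (P : 'M[C]_n) : (P ^t Num.conj)%sesqui = adj P.
Proof. by rewrite /adj map_trmx. Qed.

Lemma spectral n (A : 'M[C]_n) : adj A = A ->
  exists P : 'M[C]_n, exists d : 'rV[C]_n,
    [/\ P *m adj P = 1%:M, adj P *m P = 1%:M & A = adj P *m diag_mx d *m P].
Proof.
move=> hA.
have nA : A \is normalmx.
  by apply/normalmxP; rewrite adj_tC hA.
have /orthomx_spectralP eA := nA.
set P := spectralmx A in eA.
have uP : P \is unitarymx by apply: spectral_unitarymx.
have PP : P *m adj P = 1%:M by rewrite -adj_tC; apply/unitarymxP.
have iP : invmx P = adj P by rewrite -adj_tC; apply: invmx_unitary.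
exists P, (spectral_diag A); split => //.
  by rewrite -iP mulVmx // spectral_unit.
by rewrite -iP.
Qed.


Definition ip m n (A B : 'M[C]_(m, n)) : R := complex.Re (\tr (adj A *m B)).

Lemma tr_adjM m n (A B : 'M[C]_(m, n)) :
  \tr (adj A *m B) = \sum_i \sum_j conjc (A i j) * B i j.
Proof.
rewrite /mxtrace exchange_big /=; apply: eq_bigr => i _.
by rewrite mxE; apply: eq_bigr => j _; rewrite adjE.
Qed.

Lemma Re_ge0 (z : C) : 0 <= z -> 0 <= complex.Re z.
Proof. by rewrite lecE => /andP[]. Qed.

Lemma ge0_RE (z : C) : 0 <= z -> z = ((complex.Re z)%:C)%C.
Proof. by case: z => a b; rewrite lecE /= => /andP[/eqP-> _]. Qed.

Lemma ReM_real (c : R) (z : C) : complex.Re ((c%:C)%C * z) = c * complex.Re z.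
Proof. by case: z => a b /=; rewrite mul0r subr0. Qed.

Lemma ReD (x y : C) : complex.Re (x + y) = complex.Re x + complex.Re y.
Proof. by case: x; case: y. Qed.

Lemma ReN (x : C) : complex.Re (- x) = - complex.Re x.
Proof. by case: x. Qed.

Lemma ReB (x y : C) : complex.Re (x - y) = complex.Re x - complex.Re y.
Proof. by rewrite ReD ReN. Qed.

Lemma Re_sum (I : Type) (r : seq I) (P : pred I) (F : I -> C) :
  complex.Re (\sum_(i <- r | P i) F i) = \sum_(i <- r | P i) complex.Re (F i).
Proof. by apply: (big_morph _ ReD). Qed.

Lemma ImD (x y : C) : complex.Im (x + y) = complex.Im x + complex.Im y.
Proof. by case: x; case: y. Qed.

Lemma Re_real (x : R) : complex.Re ((x%:C)%C) = x. Proof. by []. Qed.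

Lemma Re_conj (x : C) : complex.Re (conjc x) = complex.Re x.
Proof. by case: x. Qed.

Lemma trC_ge0 m n (A : 'M[C]_(m, n)) : 0 <= \tr (adj A *m A).
Proof.
rewrite tr_adjM; apply: sumr_ge0 => i _; apply: sumr_ge0 => j _.
by rewrite mulrC mulcJ_ge0.
Qed.

Lemma ip_ge0 m n (A : 'M[C]_(m, n)) : 0 <= ip A A.
Proof. exact/Re_ge0/trC_ge0. Qed.

Lemma frob_sq m n (A : 'M[C]_(m, n)) : frob A ^+ 2 = ip A A.
Proof. by rewrite /frob sqr_sqrtr // ip_ge0. Qed.

Lemma frob_le m n (A B : 'M[C]_(m, n)) : frob A <= frob B -> ip A A <= ip B B.
Proof.
move=> h; rewrite -!frob_sq; apply: lerXn2r => //; rewrite ?nnegrE ?sqrtr_ge0 //.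
Qed.

Lemma ipDr m n (A B B' : 'M[C]_(m, n)) : ip A (B + B') = ip A B + ip A B'.
Proof. by rewrite /ip mulmxDr mxtraceD ReD. Qed.

Lemma ipDl m n (A A' B : 'M[C]_(m, n)) : ip (A + A') B = ip A B + ip A' B.
Proof. by rewrite /ip adjD mulmxDl mxtraceD ReD. Qed.

Lemma ipNr m n (A B : 'M[C]_(m, n)) : ip A (- B) = - ip A B.
Proof. by rewrite /ip mulmxN linearN ReN. Qed.

Lemma ipNl m n (A B : 'M[C]_(m, n)) : ip (- A) B = - ip A B.
Proof. by rewrite /ip adjN mulNmx linearN ReN. Qed.

Lemma ipBr m n (A B B' : 'M[C]_(m, n)) : ip A (B - B') = ip A B - ip A B'.
Proof. by rewrite ipDr ipNr. Qed.

Lemma ipBl m n (A A' B : 'M[C]_(m, n)) : ip (A - A') B = ip A B - ip A' B.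
Proof. by rewrite ipDl ipNl. Qed.

Lemma ipZr m n (c : R) (A B : 'M[C]_(m, n)) : ip A ((c%:C)%C *: B) = c * ip A B.
Proof. by rewrite /ip -scalemxAr mxtraceZ ReM_real. Qed.

Lemma ipZl m n (c : R) (A B : 'M[C]_(m, n)) : ip ((c%:C)%C *: A) B = c * ip A B.
Proof. by rewrite /ip adjZ conjc_real -scalemxAl mxtraceZ ReM_real. Qed.

Lemma ipC m n (A B : 'M[C]_(m, n)) : ip A B = ip B A.
Proof.
rewrite /ip -Re_conj -tr_adj adjM adjK; done.
Qed.

Lemma ip_herm n (A Z : 'M[C]_n) : adj Z = Z -> ip A Z = complex.Re (\tr (A *m Z)).
Proof.
move=> hZ; rewrite /ip -Re_conj -tr_adj adjM adjK hZ mxtrace_mulC; done.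
Qed.


Lemma psd_row n (A : 'M[C]_n) (v : 'rV[C]_n) : psd A -> 0 <= (v *m A *m adj v) ord0 ord0.
Proof. by move=> /(_ (adj v)); rewrite adjK. Qed.

Lemma conj_entry m n (P : 'M[C]_(m, n)) (A : 'M[C]_n) k :
  (P *m A *m adj P) k k = (row k P *m A *m adj (row k P)) ord0 ord0.
Proof.
rewrite !mxE; apply: eq_bigr => j _; congr (_ * _).
  by rewrite !mxE; apply: eq_bigr => l _; rewrite !mxE.
by rewrite !adjE mxE.
Qed.

Lemma psd_conj_diag m n (P : 'M[C]_(m, n)) (A : 'M[C]_n) k :
  psd A -> 0 <= (P *m A *m adj P) k k.
Proof. by move=> hA; rewrite conj_entry; apply: psd_row. Qed.

Lemma psd_congr n m (A : 'M[C]_n) (Q : 'M[C]_(n, m)) :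
  psd A -> psd (adj Q *m A *m Q).
Proof.
move=> hA v; have := hA (Q *m v); rewrite adjM !mulmxA; done.
Qed.

Lemma psdD n (A B : 'M[C]_n) : psd A -> psd B -> psd (A + B).
Proof.
by move=> hA hB v; rewrite mulmxDr mulmxDl mxE addr_ge0.
Qed.

Lemma psd1 n : psd (1%:M : 'M[C]_n).
Proof.
move=> v; rewrite mulmx1; have := trC_ge0 v.
by rewrite /mxtrace big_ord1.
Qed.

Lemma psdZ n (c : R) (A : 'M[C]_n) : 0 <= c -> psd A -> psd ((c%:C)%C *: A).
Proof.
move=> hc hA v; rewrite -scalemxAr -scalemxAl mxE mulr_ge0 //.
by rewrite ler0c.
Qed.

Lemma psd_diag_ge0 n (A : 'M[C]_n) k : psd A -> 0 <= A k k.
Proof.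
by move=> hA; have := psd_conj_diag 1%:M k hA; rewrite adj1 mul1mx mulmx1.
Qed.

Lemma psd_tr_ge0 n (A : 'M[C]_n) : psd A -> 0 <= \tr A.
Proof. by move=> hA; apply: sumr_ge0 => k _; apply: psd_diag_ge0. Qed.

Lemma herm_diag_Im n (A : 'M[C]_n) k : adj A = A -> complex.Im (A k k) = 0.
Proof.
move=> hA; have := congr1 (fun M : 'M[C]_n => M k k) hA; rewrite /= adjE.
case: (A k k) => a b /= [] h.
have : b + b = 0 by rewrite -{1}h addNr.
by move=> H; lra.
Qed.

Lemma herm_tr_Im n (A : 'M[C]_n) : adj A = A -> complex.Im (\tr A) = 0.
Proof.
move=> hA; rewrite /mxtrace (big_morph _ ImD (erefl : complex.Im (0:C) = 0)).
by rewrite big1 // => k _; rewrite herm_diag_Im.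
Qed.

Lemma spec_psd n (A : 'M[C]_n) : adj A = A -> psd A ->
  exists P : 'M[C]_n, exists r : 'I_n -> R,
   [/\ P *m adj P = 1%:M, adj P *m P = 1%:M,
       A = adj P *m diag_mx (\row_k ((r k)%:C)%C) *m P & forall k, 0 <= r k].
Proof.
move=> hA pA; have [P [d [PP PP' eA]]] := spectral hA.
have eD : P *m A *m adj P = diag_mx d.
  by rewrite eA !mulmxA PP mul1mx -mulmxA PP mulmx1.
have dge0 k : 0 <= d ord0 k.
  by have := psd_conj_diag P k pA; rewrite eD mxE eqxx mulr1n.
exists P, (fun k => complex.Re (d ord0 k)); split => //.
  rewrite {1}eA; congr (_ *m diag_mx _ *m _); apply/rowP => k.
  by rewrite mxE -ge0_RE.
by move=> k; apply: Re_ge0.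
Qed.

Section SpecFacts.
Variables (n : nat) (A P : 'M[C]_n) (r : 'I_n -> R).
Hypotheses (PP : P *m adj P = 1%:M) (PP' : adj P *m P = 1%:M)
  (eA : A = adj P *m diag_mx (\row_k ((r k)%:C)%C) *m P).

Lemma spec_det : \det A = ((\prod_k r k)%:C)%C.
Proof.
rewrite eA !det_mulmx mulrC mulrA -det_mulmx PP det1 mul1r det_diag rmorph_prod.
by apply: eq_bigr => k _; rewrite mxE.
Qed.

Lemma spec_tr : \tr A = ((\sum_k r k)%:C)%C.
Proof.
rewrite eA mxtrace_mulC mulmxA PP mul1mx mxtrace_diag rmorph_sum.
by apply: eq_bigr => k _; rewrite mxE.
Qed.

Lemma spec_trM (W : 'M[C]_n) :
  \tr (A *m W) = \sum_k ((r k)%:C)%C * (P *m W *m adj P) k k.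
Proof.
rewrite eA -!mulmxA mxtrace_mulC -!mulmxA mul_diag_mx /mxtrace.
by apply: eq_bigr => k _; rewrite !mxE.
Qed.

Lemma spec_conj : P *m A *m adj P = diag_mx (\row_k ((r k)%:C)%C).
Proof. by rewrite eA !mulmxA PP mul1mx -mulmxA PP mulmx1. Qed.

End SpecFacts.

Lemma sum_ge_term (I : finType) (F : I -> R) k :
  (forall i, 0 <= F i) -> F k <= \sum_i F i.
Proof.
move=> h; rewrite (bigD1 k) //= lerDl; apply: sumr_ge0 => i _; exact: h.
Qed.

Lemma ip_psd_ge0 n (X W : 'M[C]_n) : adj X = X -> psd X -> psd W -> 0 <= ip X W.
Proof.
move=> hX pX pW; have [P [r [PP PP' eX rge0]]] := spec_psd hX pX.
rewrite /ip hX (spec_trM eX); apply: Re_ge0; apply: sumr_ge0 => k _.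
by apply: mulr_ge0; [rewrite ler0c | apply: psd_conj_diag].
Qed.

Lemma ip_self_le n (X : 'M[C]_n) : adj X = X -> psd X ->
  ip X X <= complex.Re (\tr X) ^+ 2.
Proof.
move=> hX pX; have [P [r [PP PP' eX rge0]]] := spec_psd hX pX.
rewrite /ip {1}hX (spec_trM eX) (spec_tr PP eX) (spec_conj PP eX) Re_real.
rewrite Re_sum.
have -> : \sum_k complex.Re (((r k)%:C)%C * diag_mx (\row_k0 ((r k0)%:C)%C) k k)
   = \sum_k r k * r k.
  by apply: eq_bigr => k _; rewrite mxE eqxx mulr1n mxE ReM_real.
rewrite expr2 mulr_suml; apply: ler_sum => k _; apply: ler_wpM2l => //.
exact: sum_ge_term.
Qed.

Lemma diam n (X W : 'M[C]_n) : adj X = X -> psd X -> complex.Re (\tr X) <= 1 ->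
  adj W = W -> psd W -> complex.Re (\tr W) <= 1 -> ip (X - W) (X - W) <= 2.
Proof.
move=> hX pX tX hW pW tW.
have tX0 : 0 <= complex.Re (\tr X) by apply/Re_ge0/psd_tr_ge0.
have tW0 : 0 <= complex.Re (\tr W) by apply/Re_ge0/psd_tr_ge0.
have h1 := ip_self_le hX pX; have h2 := ip_self_le hW pW.
have h3 := ip_psd_ge0 hX pX pW.
rewrite !ipBl !ipBr (ipC W X).
have : complex.Re (\tr X) ^+ 2 <= 1 by rewrite expr_le1.
have : complex.Re (\tr W) ^+ 2 <= 1 by rewrite expr_le1.
lra.
Qed.

Lemma ln_prod (I : finType) (F : I -> R) : (forall i, 0 < F i) ->
  ln (\prod_i F i) = \sum_i ln (F i).
Proof.
move=> h; pose K := fun x y : R => 0 < x /\ ln x = y.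
have : K (\prod_i F i) (\sum_i ln (F i)).
  apply: (big_rec2 K); first by split; rewrite ?ln1.
  move=> i x y _ [x0 <-]; split; first by rewrite mulr_gt0.
  by rewrite lnM // posrE.
by case.
Qed.

Lemma ln_le_sub1 (x : R) : 0 < x -> ln x <= x - 1.
Proof.
move=> x0; have := @le_ln1Dx R (x - 1); rewrite (addrC 1) subrK; apply.
lra.
Qed.

Lemma LD0 n (N : 'M[C]_n) : adj N = N -> psd N -> 0 < complex.Re (\det N) ->
  ln (complex.Re (\det N)) <= complex.Re (\tr N) - n%:R.
Proof.
move=> hN pN; have [P [r [PP PP' eN rge0]]] := spec_psd hN pN.
rewrite (spec_det PP eN) (spec_tr PP eN) !Re_real => dpos.
have rpos k : 0 < r k.
  rewrite lt0r rge0 andbT; apply/negP => /eqP rk0.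
  by move: dpos; rewrite (bigD1 k) //= rk0 mul0r ltxx.
rewrite ln_prod // -[n in n%:R]card_ord -sumr_const -sumrB.
by apply: ler_sum => k _; apply: ln_le_sub1.
Qed.

Lemma Re_nat k : complex.Re (k%:R : C) = k%:R.
Proof. by elim: k => // k ih; rewrite !mulrS ReD ih. Qed.

Lemma psd_of_sub1 n (B : 'M[C]_n) : psd (B - 1%:M) -> psd B.
Proof. by move=> h; rewrite -(subrK 1%:M B); apply: psdD => //; apply: psd1. Qed.

Lemma spec_ge1 n (B : 'M[C]_n) : adj B = B -> psd (B - 1%:M) ->
  exists P : 'M[C]_n, exists r : 'I_n -> R,
   [/\ P *m adj P = 1%:M, adj P *m P = 1%:M,
       B = adj P *m diag_mx (\row_k ((r k)%:C)%C) *m P & forall k, 1 <= r k].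
Proof.
move=> hB pB; have [P [r [PP PP' eB rge0]]] := spec_psd hB (psd_of_sub1 pB).
exists P, r; split => // k.
have := psd_conj_diag P k pB.
rewrite mulmxBr mulmxBl mulmx1 PP (spec_conj PP eB) !mxE eqxx !mulr1n.
by rewrite subr_ge0 -[1 : C]/((1 : R)%:C)%C lecR.
Qed.

Lemma det_pos n (B : 'M[C]_n) : adj B = B -> psd (B - 1%:M) -> 0 < complex.Re (\det B).
Proof.
move=> hB pB; have [P [r [PP PP' eB rge1]]] := spec_ge1 hB pB.
rewrite (spec_det PP eB) Re_real; apply: prodr_gt0 => k _.
exact: lt_le_trans ltr01 (rge1 k).
Qed.

Lemma adj_diag_real n (f : 'I_n -> R) :
  adj (diag_mx (\row_k ((f k)%:C)%C)) = diag_mx (\row_k ((f k)%:C)%C).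
Proof.
apply/matrixP => i j; rewrite adjE !mxE.
have [->|ne] := eqVneq i j; first by rewrite !mulr1n conjc_real.
by rewrite !mulr0n rmorph0.
Qed.

Lemma LD n (B B' : 'M[C]_n) : adj B = B -> adj B' = B' -> psd (B - 1%:M) ->
  psd (B' - 1%:M) ->
  ln (complex.Re (\det B')) <=
    ln (complex.Re (\det B)) + complex.Re (\tr (invmx B *m (B' - B))).
Proof.
move=> hB hB' pB pB'.
have [P [r [PP PP' eB rge1]]] := spec_ge1 hB pB.
have [P' [r' [QQ QQ' eB' rge1']]] := spec_ge1 hB' pB'.
have rpos k : 0 < r k by exact: lt_le_trans ltr01 (rge1 k).
have rpos' k : 0 < r' k by exact: lt_le_trans ltr01 (rge1' k).
have r0 k : r k != 0 by rewrite gt_eqF.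
pose E := diag_mx (\row_k ((Num.sqrt (r k)^-1)%:C)%C).
pose Dinv := diag_mx (\row_k (((r k)^-1)%:C)%C).
have EE : E *m E = Dinv.
  rewrite /E /Dinv mulmx_diag; congr diag_mx; apply/rowP => k; rewrite !mxE.
  by rewrite -rmorphM -expr2 sqr_sqrtr // invr_ge0 ltW.
have hE : adj E = E by apply: adj_diag_real.
have dB : \det B = ((\prod_k r k)%:C)%C by apply: (spec_det PP eB).
have dB' : \det B' = ((\prod_k r' k)%:C)%C by apply: (spec_det QQ eB').
have Bu : B \in unitmx.
  rewrite unitmxE unitfE dB; apply/negP => /eqP.
  rewrite -[0 : C]/((0:R)%:C)%C => /complexI /eqP; rewrite prodf_seq_eq0.
  by move/hasP => [k _ /= /eqP rk0]; have := rpos k; rewrite rk0 ltxx.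
have iB : invmx B = adj P *m Dinv *m P.
  have BX : B *m (adj P *m Dinv *m P) = 1%:M.
    rewrite eB !mulmxA -(mulmxA _ P) PP mulmx1 -(mulmxA _ _ Dinv) /Dinv mulmx_diag.
    have -> : (\row_j ((\row_k ((r k)%:C)%C) 0 j * (\row_k (((r k)^-1)%:C)%C) 0 j))
        = const_mx 1.
      by apply/rowP => k; rewrite !mxE -rmorphM mulfV.
    by rewrite diag_const_mx mulmx1 PP'.
  by have := mulKmx Bu (adj P *m Dinv *m P); rewrite BX mulmx1.
pose Q := adj P *m E.
have hQ : adj Q = E *m P by rewrite /Q adjM adjK hE.
have QQa : Q *m adj Q = invmx B by rewrite hQ /Q iB -!mulmxA (mulmxA E) EE.
have QaQ : adj Q *m Q = Dinv by rewrite hQ /Q -!mulmxA (mulmxA P) PP mul1mx EE.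
clearbody Q.
pose N := adj Q *m B' *m Q.
have hN : adj N = N by rewrite /N !adjM adjK hB' mulmxA.
have pN : psd N by apply: psd_congr; apply: psd_of_sub1.
have dN : \det N = \det B' * ((\prod_k (r k)^-1)%:C)%C.
  rewrite /N !det_mulmx mulrAC mulrC -det_mulmx QaQ det_diag rmorph_prod.
  by congr (_ * _); apply: eq_bigr => k _; rewrite mxE.
have tN : \tr N = \tr (invmx B *m B').
  by rewrite /N mxtrace_mulC mulmxA QQa.
have ReN : complex.Re (\det N) = (\prod_k r' k) * (\prod_k (r k)^-1).
  by rewrite dN dB' -rmorphM.
have p1 : 0 < \prod_k r' k by apply: prodr_gt0.
have p2 : 0 < \prod_k (r k)^-1 by apply: prodr_gt0 => k _; rewrite invr_gt0.
have p3 : 0 < \prod_k r k by apply: prodr_gt0.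
have NP : 0 < complex.Re (\det N) by rewrite ReN mulr_gt0.
have := LD0 hN pN NP.
rewrite dB dB' !Re_real ReN mulmxBr mxtraceD linearN /= ReB mulVmx // mxtrace1 Re_nat.
rewrite -tN lnM ?posrE // prodfV lnV ?posrE //.
lra.
Qed.

Lemma key_alg (Pc Pmax s s' Lx Lw ax aw : R) :
  0 < Pc -> 0 < Pmax -> s <= 1 -> s' <= 1 ->
  Lw <= Lx + (Pc * Pmax / (Pc + Pmax * (1 - s'))) * aw - (Pc * Pmax / (Pc + Pmax * (1 - s))) * ax ->
  Lw / (Pc + Pc * Pmax / (Pc + Pmax * (1 - s')) * s') - Lx / (Pc + Pc * Pmax / (Pc + Pmax * (1 - s)) * s) <=
  Pmax / (Pc + Pmax) * ((aw - ax) + ((Pc * Pmax / (Pc + Pmax * (1 - s))) * ax - Lx) / Pc * (s' - s)).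
Proof.
move=> hPc hPm hs hs'.
set t := Pc + Pmax * (1 - s); set t' := Pc + Pmax * (1 - s').
have tp : 0 < t.
  have : 0 <= Pmax * (1 - s) by rewrite mulr_ge0 ?subr_ge0 // ltW.
  rewrite /t; lra.
have tp' : 0 < t'.
  have : 0 <= Pmax * (1 - s') by rewrite mulr_ge0 ?subr_ge0 // ltW.
  rewrite /t'; lra.
have pp : 0 < Pc + Pmax by lra.
have D0 : 0 < Pc * (Pc + Pmax) by apply: mulr_gt0 => //; lra.
have et : Pmax * s = Pc + Pmax - t by rewrite /t; ring.
have et' : Pmax * s' = Pc + Pmax - t' by rewrite /t'; ring.
have e0 : forall T S, Pmax * S = Pc + Pmax - T -> 0 < T ->
    Pc + Pc * Pmax / T * S = Pc * (Pc + Pmax) / T.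
  move=> T S eT T0.
  have -> : S = (Pc + Pmax - T) / Pmax by rewrite -eT; field; rewrite gt_eqF.
  field; rewrite !gt_eqF //.
rewrite (e0 t s) // (e0 t' s') //.
have -> : Lw / (Pc * (Pc + Pmax) / t') = t' / (Pc * (Pc + Pmax)) * Lw.
  by field; rewrite !gt_eqF.
have -> : Lx / (Pc * (Pc + Pmax) / t) = t / (Pc * (Pc + Pmax)) * Lx.
  by field; rewrite !gt_eqF.
move=> hL.
have h1 : t' / (Pc * (Pc + Pmax)) * Lw <= t' / (Pc * (Pc + Pmax)) *
   (Lx + Pc * Pmax / t' * aw - Pc * Pmax / t * ax).
  by apply: ler_wpM2l => //; apply: divr_ge0; apply: ltW.
apply: le_trans (lerD h1 (lexx _)) _.
rewrite le_eqVlt; apply/orP; left; apply/eqP.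
have -> : s' - s = (t - t') / Pmax by rewrite /t /t'; field; rewrite gt_eqF.
by field; rewrite !gt_eqF.
Qed.

Lemma hermZ n (c : R) (X : 'M[C]_n) : adj X = X -> adj ((c%:C)%C *: X) = (c%:C)%C *: X.
Proof. by move=> h; rewrite adjZ conjc_real h. Qed.

Lemma herm_psd_B m n (H : 'M[C]_(m, n)) (Q : 'M[C]_n) : adj Q = Q -> psd Q ->
  adj (1%:M + H *m Q *m adj H) = 1%:M + H *m Q *m adj H /\
  psd ((1%:M + H *m Q *m adj H) - 1%:M).
Proof.
move=> hQ pQ; split.
  by rewrite adjD adj1 !adjM adjK hQ mulmxA.
rewrite addrAC subrr add0r; have := psd_congr (adj H) pQ; rewrite adjK; done.
Qed.

Lemma Re_div_real (x : C) (c : R) : complex.Re (x / (c%:C)%C) = complex.Re x / c.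
Proof. by rewrite -fmorphV mulrC ReM_real mulrC. Qed.

Lemma ReTrB n (A U V : 'M[C]_n) :
  complex.Re (\tr (A *m (U - V))) = complex.Re (\tr (A *m U)) - complex.Re (\tr (A *m V)).
Proof. by rewrite mulmxBr mxtraceD ReD linearN ReN. Qed.

Lemma ReTrZ n (A U : 'M[C]_n) (c : R) :
  complex.Re (\tr (A *m ((c%:C)%C *: U))) = c * complex.Re (\tr (A *m U)).
Proof. by rewrite -scalemxAr mxtraceZ ReM_real. Qed.

Lemma ReTrBm n (U V : 'M[C]_n) :
  complex.Re (\tr (U - V)) = complex.Re (\tr U) - complex.Re (\tr V).
Proof. by rewrite mxtraceD ReD linearN ReN. Qed.

Lemma ip_scalar_herm n (a : C) (Z : 'M[C]_n) : adj Z = Z ->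
  ip (a%:M) Z = complex.Re a * complex.Re (\tr Z).
Proof.
move=> hZ; rewrite /ip adj_scalar mul_scalar_mx mxtraceZ.
have := herm_tr_Im hZ; case: (\tr Z) => x y /= ->.
by case: a => u v /=; rewrite !mulr0 subr0.
Qed.

Lemma conc K N M (Pc Pmax : R) (H : 'M[C]_(K * N, K * M)) (X W : 'M[C]_(K * M)) :
  0 < Pc -> 0 < Pmax -> Xset X -> Xset W ->
  EE Pc H (QofX Pc Pmax W) - EE Pc H (QofX Pc Pmax X) <= ip (Vgrad Pc Pmax H X) (W - X).
Proof.
move=> hPc hPm [bX [hX [pX tX]]] [bW [hW [pW tW]]].
have {hX}hX : adj X = X := hX. have {hW}hW : adj W = W := hW.
set s := complex.Re (\tr X); set s' := complex.Re (\tr W).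
set t := Pc + Pmax * (1 - s); set t' := Pc + Pmax * (1 - s').
have tp : 0 < t.
  have : 0 <= Pmax * (1 - s) by rewrite mulr_ge0 ?subr_ge0 // ltW.
  rewrite /t; lra.
have tp' : 0 < t'.
  have : 0 <= Pmax * (1 - s') by rewrite mulr_ge0 ?subr_ge0 // ltW.
  rewrite /t'; lra.
have cq : 0 <= Pc * Pmax / t by rewrite divr_ge0 ?mulr_ge0 // ltW.
have cq' : 0 <= Pc * Pmax / t' by rewrite divr_ge0 ?mulr_ge0 // ltW.
rewrite /EE /Vgrad /QofX -/s -/s' -/t -/t'.
set Q := ((Pc * Pmax / t)%:C)%C *: X; set Q' := ((Pc * Pmax / t')%:C)%C *: W.
have hQ : adj Q = Q by apply: hermZ.
have hQ' : adj Q' = Q' by apply: hermZ.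
have pQ : psd Q by apply: psdZ.
have pQ' : psd Q' by apply: psdZ.
have [hB pB] := herm_psd_B H hQ pQ.
have [hB' pB'] := herm_psd_B H hQ' pQ'.
have LDi := LD hB hB' pB pB'.
set A := Amat H Q.
have etr : complex.Re (\tr (invmx (1%:M + H *m Q *m adj H) *m
     ((1%:M + H *m Q' *m adj H) - (1%:M + H *m Q *m adj H))))
   = Pc * Pmax / t' * complex.Re (\tr (A *m W)) - Pc * Pmax / t * complex.Re (\tr (A *m X)).
  rewrite opprD addrACA subrr add0r -mulmxBl -mulmxBr mxtrace_mulC.
  rewrite -!mulmxA mxtrace_mulC -!mulmxA mxtrace_mulC !mulmxA.
  by rewrite -[adj H *m _ *m H]/A ReTrB /Q /Q' !ReTrZ.
rewrite etr in LDi.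
have trQ : complex.Re (\tr Q) = Pc * Pmax / t * s by rewrite /Q mxtraceZ ReM_real.
have trQ' : complex.Re (\tr Q') = Pc * Pmax / t' * s' by rewrite /Q' mxtraceZ ReM_real.
have hZ : adj (W - X) = W - X by rewrite adjB hW hX.
rewrite ipZl ipDl ip_herm // ip_scalar_herm // ReTrB ReTrBm -/s -/s'.
rewrite Re_div_real ReB Re_real /Q ReTrZ -/Q trQ trQ'.
apply: key_alg => //.
by rewrite /rate -addrA.
Qed.

Lemma ip_expand m n (U V : 'M[C]_(m, n)) :
  ip (U + V) (U + V) = ip U U + 2 * ip U V + ip V V.
Proof. rewrite !ipDl !ipDr (ipC V U); ring. Qed.

Lemma ipNN m n (U V : 'M[C]_(m, n)) : ip (- U) (- V) = ip U V.
Proof. by rewrite ipNl ipNr opprK. Qed.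

Lemma blockdiag_comb K M (X W : 'M[C]_(K * M)) (a : C) :
  blockdiag X -> blockdiag W -> blockdiag (X + a *: (W - X)).
Proof.
by move=> bX bW i j h; rewrite !mxE bX // bW // subrr mulr0 addr0.
Qed.

Lemma blockdiagZ K M (X : 'M[C]_(K * M)) (a : C) :
  blockdiag X -> blockdiag (a *: X).
Proof. by move=> bX i j h; rewrite !mxE bX // mulr0. Qed.

Lemma Xset_conv K M (X W : 'M[C]_(K * M)) (a : R) : 0 <= a -> a <= 1 ->
  Xset X -> Xset W -> Xset (X + (a%:C)%C *: (W - X)).
Proof.
move=> a0 a1 [bX [hX [pX tX]]] [bW [hW [pW tW]]].
have {hX}hX : adj X = X := hX. have {hW}hW : adj W = W := hW.
have e : X + (a%:C)%C *: (W - X) = ((1 - a)%:C)%C *: X + (a%:C)%C *: W.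
  apply/matrixP => i j; rewrite !mxE.
  have -> : ((1 - a)%:C)%C = 1 - (a%:C)%C by rewrite rmorphB rmorph1.
  ring.
split; first exact: blockdiag_comb.
split.
  by rewrite /Defs.hermitian adjD adjZ conjc_real adjB hX hW.
split.
  by rewrite e; apply: psdD; apply: psdZ => //; rewrite subr_ge0.
rewrite mxtraceD mxtraceZ ReD ReM_real ReTrBm.
have : a * (complex.Re (\tr W) - complex.Re (\tr X)) <= a * (1 - complex.Re (\tr X)).
  by apply: ler_wpM2l => //; lra.
have : a * (1 - complex.Re (\tr X)) <= 1 - complex.Re (\tr X).
  rewrite -[X in _ <= X]mul1r; apply: ler_wpM2r => //; lra.
lra.
Qed.

Lemma neg_contra (g b : R) : 0 <= b ->
  (forall a, 0 < a -> a <= 1 -> 0 <= 2 * a * g + a ^+ 2 * b) -> 0 <= g.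
Proof.
move=> b0 h; rewrite leNgt; apply/negP => g0.
have bg : 0 < b - g by lra.
pose a := - g / (b - g).
have a0 : 0 < a by rewrite /a divr_gt0 //; lra.
have a1 : a <= 1 by rewrite /a ler_pdivrMr // mul1r; lra.
have := h a a0 a1.
have -> : 2 * a * g + a ^+ 2 * b = a * (2 * g + a * b) by ring.
rewrite pmulr_rge0 //.
have ab : a * b <= - g.
  rewrite /a mulrAC ler_pdivrMr //; have gg : 0 <= g * g by rewrite -expr2 sqr_ge0.
  nra.
lra.
Qed.

Lemma proj_ineq K M (Y Z W : 'M[C]_(K * M)) :
  is_proj Y Z -> Xset W -> ip (Z - W) (Z - W) <= ip (Y - W) (Y - W).
Proof.
move=> [xZ hmin] xW.
have g0 : 0 <= ip (Z - Y) (W - Z).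
  apply: (neg_contra (ip_ge0 (W - Z))) => a a0 a1.
  have := frob_le (hmin _ (Xset_conv (ltW a0) a1 xZ xW)).
  have -> : Z + (a%:C)%C *: (W - Z) - Y = (Z - Y) + (a%:C)%C *: (W - Z).
    by rewrite addrAC.
  rewrite (ip_expand (Z - Y)) ipZr ipZl ipZr.
  have -> : a * (a * ip (W - Z) (W - Z)) = a ^+ 2 * ip (W - Z) (W - Z) by rewrite expr2 mulrA.
  lra.
have -> : Y - W = (Y - Z) + (Z - W) by rewrite addrA subrK.
rewrite (ip_expand (Y - Z)).
have -> : ip (Y - Z) (Z - W) = ip (Z - Y) (W - Z).
  by rewrite -ipNN !opprB.
have := ip_ge0 (Y - Z); lra.
Qed.

Lemma QtoX K M (Pc Pmax : R) (Q : 'M[C]_(K * M)) : 0 < Pc -> 0 < Pmax -> Qset Pmax Q ->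
  let k := (Pc + Pmax) / (Pmax * (Pc + complex.Re (\tr Q))) in
  Xset ((k%:C)%C *: Q) /\ QofX Pc Pmax ((k%:C)%C *: Q) = Q.
Proof.
move=> hPc hPm [bQ [hQ [pQ tQ]]] k.
have {hQ}hQ : adj Q = Q := hQ.
set q := complex.Re (\tr Q) in tQ k *.
have q0 : 0 <= q by apply/Re_ge0/psd_tr_ge0.
have k0 : 0 < k by rewrite /k divr_gt0 ?mulr_gt0 //; lra.
have tk : complex.Re (\tr ((k%:C)%C *: Q)) = k * q by rewrite mxtraceZ ReM_real.
have e1 : 1 - k * q = Pc * (Pmax - q) / (Pmax * (Pc + q)).
  have pq : 0 < Pc + q by lra.
  by rewrite /k; field; rewrite !gt_eqF.
split.
  split; first exact: blockdiagZ.
  split; first by apply: hermZ.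
  split; first by apply: psdZ => //; apply: ltW.
  rewrite tk; have : 0 <= 1 - k * q.
    by rewrite e1; apply: divr_ge0; apply: mulr_ge0; lra.
  lra.
rewrite /QofX tk scalerA -rmorphM.
have f1 : forall q : R, 0 <= q -> Pc * Pmax / (Pc + Pmax * (Pc * (Pmax - q) / (Pmax * (Pc + q))))
    * ((Pc + Pmax) / (Pmax * (Pc + q))) = 1.
  move=> x x0; field; rewrite !gt_eqF //; try nra.
have -> : Pc * Pmax / (Pc + Pmax * (1 - k * q)) * k = 1.
  by rewrite e1 /k f1.
by rewrite rmorph1 scale1r.
Qed.

End LA.


Section An.
Variable R : realType.

Lemma tel (gamma a : nat -> R) T : (1 <= T)%N ->
  (forall n, (1 <= n)%N -> 0 < gamma n) ->
  (forall n, (1 <= n)%N -> gamma n.+1 <= gamma n) ->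
  (forall n, (1 <= n)%N -> 0 <= a n <= 2) ->
  \sum_(1 <= n < T.+1) (a n - a n.+1) / (2 * gamma n) <= 1 / gamma T.
Proof.
move=> T1 gp gd ab.
suff : \sum_(1 <= n < T.+1) (a n - a n.+1) / (2 * gamma n) + a T.+1 / (2 * gamma T)
       <= 1 / gamma T.
  have : 0 <= a T.+1 / (2 * gamma T).
    have /andP[a0 _] := ab T.+1 isT.
    by rewrite divr_ge0 // mulr_ge0 // ltW // gp.
  lra.
elim: T T1 => [//|T IH] _.
have gT1 := gp T.+1 isT.
have [T0|T0] : T = 0%N \/ (0 < T)%N by case: T {IH gT1} => [|T]; [left|right].
  rewrite T0.
  rewrite big_nat1 -mulrDl subrK.
  have /andP[_ a1] := ab 1%N isT.
  have g1 := gp 1%N isT.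
  rewrite ler_pdivrMr; last by rewrite mulr_gt0.
  have -> : 1 / gamma 1%N * (2 * gamma 1%N) = 2 by field; rewrite gt_eqF.
  done.
have gT := gp T T0.
have {IH} IH := IH T0.
rewrite big_nat_recr //= -addrA -mulrDl subrK.
have /andP[a0 a2] := ab T.+1 isT.
set u := gamma T; set u' := gamma T.+1.
have uu : u' <= u by apply: gd.
set S := \sum_(1 <= i < T.+1) _ in IH *.
have e1 : a T.+1 / (2 * u') = a T.+1 / 2 * u'^-1 by rewrite invfM mulrA.
have e2 : a T.+1 / (2 * u) = a T.+1 / 2 * u^-1 by rewrite invfM mulrA.
rewrite e1; rewrite e2 in IH; rewrite !div1r in IH *.
have iu : u^-1 <= u'^-1 by rewrite lef_pV2 ?posrE.
have : a T.+1 / 2 * (u'^-1 - u^-1) <= u'^-1 - u^-1.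
  rewrite -[X in _ <= X]mul1r; apply: ler_wpM2r; first by rewrite subr_ge0.
  lra.
lra.
Qed.

Lemma sqrt_sum T : \sum_(1 <= n < T.+1) 1 / Num.sqrt (n%:R : R) <= 2 * Num.sqrt (T%:R : R).
Proof.
elim: T => [|T IH]; first by rewrite big_geq // sqrtr0 mulr0.
rewrite big_nat_recr //=.
set x := Num.sqrt (T%:R : R) in IH *; set y := Num.sqrt (T.+1%:R : R).
have x0 : 0 <= x by apply: sqrtr_ge0.
have y0 : 0 < y by rewrite sqrtr_gt0 ltr0n.
have exy : y ^+ 2 = x ^+ 2 + 1.
  by rewrite /x /y !sqr_sqrtr ?ler0n // -natr1.

suff : 1 / y <= 2 * y - 2 * x by lra.
rewrite ler_pdivrMr //.
have : 0 <= (x - y) ^+ 2 by apply: sqr_ge0.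
move: exy; rewrite !expr2 => exy h.
nra.
Qed.

Lemma esup_le0 (x b : nat -> R) : (forall T, (1 <= T)%N -> x T <= b T) ->
  b @ \oo --> 0 -> (limn_esup (fun T => (x T)%:E) <= 0)%E.
Proof.
move=> xb bc.
have bE : (fun T => (b T)%:E) @ \oo --> (0 : R)%:E by apply: cvg_EFin => //; near=> T.
rewrite limn_esup_lim.
have -> : (0 : \bar R) = limn (esups (fun T => (b T)%:E)).
  by apply/esym/cvg_lim => //; apply: cvg_esups.
apply: lee_lim; [exact: is_cvg_esups | exact: is_cvg_esups |].
near=> n; apply: ge_ereal_sup => _ [m /= nm <-].
apply: (@le_trans _ _ (b m)%:E); first by rewrite lee_fin xb //; apply: leq_trans nm; near: n; exists 1%N.
by apply: ereal_sup_ubound; exists m.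
Unshelve. all: by end_near. Qed.

Lemma b_cvg (gamma : nat -> R) (c : R) : (forall n, (1 <= n)%N -> 0 < gamma n) ->
  gamma @ \oo --> (0 : R) -> (fun n => n%:R * gamma n) @ \oo --> +oo ->
  (fun T => (1 / gamma T + c * \sum_(1 <= n < T.+1) gamma n) / T%:R) @ \oo --> (0 : R).
Proof.
move=> gp g0 ginf.
have e : (fun T => (1 / gamma T + c * \sum_(1 <= n < T.+1) gamma n) / T%:R) =
   (fun T => (T%:R * gamma T)^-1 + c * ((\sum_(1 <= n < T.+1) gamma n) / T%:R)).
  apply: funext => T; rewrite mulrDl invfM div1r mulrC mulrA.
  done.
have h1 : (fun T => (T%:R * gamma T)^-1) @ \oo --> (0:R).
  apply/gtr0_cvgV0 => //; near=> T; apply: mulr_gt0; first by rewrite ltr0n; near: T; exists 1%N.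
  by apply: gp; near: T; exists 1%N.
have h2 : (fun T => (\sum_(1 <= n < T.+1) gamma n) / T%:R) @ \oo --> (0:R).
  pose u := fun k => gamma k.+1.
  have u0 : u @ \oo --> (0 : R).
    exact: (eq_rect_r (fun P : Prop => P) g0 (cvg_shiftS gamma (nbhs (0:R)))).
  have h := cesaro u0.
  refine (eq_rect _ (fun P : Prop => P) _ _ (cvg_shiftS (fun T => (\sum_(1 <= n < T.+1) gamma n) / T%:R) (nbhs (0:R)))).
  have E : arithmetic_mean u =1 (fun n => (\sum_(1 <= k < n.+2) gamma k) / n.+1%:R).
    by move=> n; rewrite /arithmetic_mean /series /= mulrC big_add1 /=.
  by rewrite -(eq_cvg _ _ E).
have := cvgD h1 (cvgM (cvg_cst c) h2); rewrite mulr0 addr0 e; apply.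
Unshelve. all: by end_near.
Qed.

End An.


Unset Implicit Arguments.

Theorem theorem1 (R : realType) (K M N : nat) (Pc Pmax V0 : R)
  (H : nat -> 'M[R[i]]_(K * N, K * M))
  (gamma : nat -> R) (X : nat -> 'M[R[i]]_(K * M)) :
  (1 <= K)%N -> (1 <= M)%N -> (1 <= N)%N ->
  0 < Pc -> 0 < Pmax -> 0 < V0 ->
  (forall n, (1 <= n)%N -> blockdiag (H n)) ->
  (forall n, (1 <= n)%N -> frob (Vgrad Pc Pmax (H n) (X n)) <= V0) ->
  (forall n, (1 <= n)%N -> 0 < gamma n) ->
  (forall n, (1 <= n)%N -> gamma n.+1 <= gamma n) ->
  gamma @ \oo --> (0 : R) ->
  (fun n => n%:R * gamma n) @ \oo --> +oo ->
  Xset (X 1%N) ->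
  (forall n, (1 <= n)%N ->
     is_proj (X n + ((gamma n)%:C)%C *: Vgrad Pc Pmax (H n) (X n)) (X n.+1)) ->
  let Qpol := fun n => QofX Pc Pmax (X n) in
  [/\ (limn_esup (fun T => ((Reg Pc Pmax H Qpol T) / T%:R)%:E) <= 0)%E,
      (forall T, (1 <= T)%N ->
         Reg Pc Pmax H Qpol T <=
           1 / gamma T + 1 / 2 * V0 ^+ 2 * \sum_(1 <= n < T.+1) gamma n) &
      (forall g : R, 0 < g -> (forall n, (1 <= n)%N -> gamma n = g / Num.sqrt n%:R) ->
       forall T, (1 <= T)%N ->
         Reg Pc Pmax H Qpol T <= (1 + g ^+ 2 * V0 ^+ 2) / g * Num.sqrt T%:R)].
Proof.
move=> K1 M1 N1 hPc hPm hV0 bH hV gp gd g0 ginf x1 hproj Qpol.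
have xX : forall n, (1 <= n)%N -> Xset (X n).
  elim => [//|n IH] _; case: n IH => [_|n IH]; first exact: x1.
  by have [] := hproj n.+1 isT.
have step : forall W, Xset W -> forall n, (1 <= n)%N ->
    ip (Vgrad Pc Pmax (H n) (X n)) (W - X n) <=
    (ip (X n - W) (X n - W) - ip (X n.+1 - W) (X n.+1 - W)) / (2 * gamma n)
     + gamma n * V0 ^+ 2 / 2.
  move=> W xW n n1.
  have hp := proj_ineq (hproj n n1) xW.
  set V := Vgrad Pc Pmax (H n) (X n) in hp *.
  have gn := gp n n1.
  have eY : X n + ((gamma n)%:C)%C *: V - W = (X n - W) + ((gamma n)%:C)%C *: V.
    by rewrite addrAC.
  rewrite eY (ip_expand (X n - W)) ipZr ipZl ipZr in hp.
  have vv : ip V V <= V0 ^+ 2.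
    rewrite -frob_sq lerXn2r ?nnegrE ?sqrtr_ge0 ?(ltW hV0) //.
    exact: hV.
  have eg : ip (X n - W) V = - ip V (W - X n) by rewrite ipC -ipNr opprB.
  rewrite eg in hp.
  set a := ip (X n - W) (X n - W) in hp *.
  set a' := ip (X n.+1 - W) (X n.+1 - W) in hp *.
  set g := ip V (W - X n) in hp *.
  have e : (a - a') / (2 * gamma n) + gamma n * V0 ^+ 2 / 2 =
      (a - a' + gamma n * (gamma n * V0 ^+ 2)) / (2 * gamma n).
    by field; rewrite gt_eqF.
  rewrite e ler_pdivlMr ?mulr_gt0 //.
  have : gamma n * (gamma n * ip V V) <= gamma n * (gamma n * V0 ^+ 2).
    by apply: ler_wpM2l; [apply: ltW | apply: ler_wpM2l => //; apply: ltW].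
  lra.
have regb : forall T, (1 <= T)%N -> Reg Pc Pmax H Qpol T <=
    1 / gamma T + 1 / 2 * V0 ^+ 2 * \sum_(1 <= n < T.+1) gamma n.
  move=> T T1; apply: ge_sup.
    exists (\sum_(1 <= n < T.+1) (EE Pc (H n) 0 - EE Pc (H n) (Qpol n))).
    exists 0; split => //.
    split; first by move=> i j _; rewrite mxE.
    split; first by rewrite /Defs.hermitian adj0.
    split; first by move=> v; rewrite mulmx0 mul0mx mxE.
    by rewrite linear0 /= ltW.
  move=> r [Qs [qQ ->]].
  have [xW eW] := QtoX hPc hPm qQ.
  set W := (_ *: Qs) in xW eW.
  apply: (@le_trans _ _ (\sum_(1 <= n < T.+1) ip (Vgrad Pc Pmax (H n) (X n)) (W - X n))).
    apply: ler_sum_nat => n /andP[n1 _].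
    rewrite -{1}eW /Qpol; apply: conc => //; exact: xX.
  apply: le_trans (ler_sum_nat (fun n nT => step W xW n (proj1 (andP nT)))) _.
  rewrite big_split /=.
  apply: lerD.
    apply: tel => // n n1; apply/andP; split; first exact: ip_ge0.
    have [bA [hA [pA tA]]] := xX n n1.
    have [bB [hB [pB tB]]] := xW.
    exact: diam.
  rewrite mulr_sumr; apply: ler_sum_nat => n _; rewrite le_eqVlt; apply/orP; left; apply/eqP; ring.
split.
- apply: (@esup_le0 _ _ (fun T => (1 / gamma T + 1 / 2 * V0 ^+ 2 * \sum_(1 <= n < T.+1) gamma n) / T%:R)).
    move=> T T1; apply: ler_wpM2r; last exact: regb.
    by rewrite invr_ge0 ler0n.
  exact: b_cvg.
- exact: regb.
- move=> g g0' hg T T1; apply: le_trans (regb T T1) _.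
  have sT : 0 < Num.sqrt (T%:R : R) by rewrite sqrtr_gt0 ltr0n.
  have eS : \sum_(1 <= n < T.+1) gamma n = g * \sum_(1 <= n < T.+1) 1 / Num.sqrt (n%:R : R).
    rewrite mulr_sumr; apply: eq_big_nat => n /andP[n1 _].
    by rewrite hg // mulrA mulr1.
  rewrite eS hg //.
  have e : (1 + g ^+ 2 * V0 ^+ 2) / g * Num.sqrt (T%:R : R) =
     1 / (g / Num.sqrt (T%:R : R)) + 1 / 2 * V0 ^+ 2 * (g * (2 * Num.sqrt (T%:R : R))).
    by field; rewrite !gt_eqF.
  rewrite e lerD2l; apply: ler_wpM2l.
    by rewrite mulr_ge0 // ?sqr_ge0.
  apply: ler_wpM2l; first exact: ltW.
  exact: sqrt_sum.
Qed.
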